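(* Let $G\subset\mathbb R^r$ be a lattice of rank $r$ acting on $C(\mathbb R^r)$ by $f^g(x)=f(x+g)$. (a) For every $n\in\mathbb Z_+$ and every $G$-periodic monomial $Q_m$ of degree $m\le n$, $D^{n+1}Q_m=0$. (b) Let $n\ge1$ and $Q_n=x_{i_1}\cdots x_{i_n}=x_1^{j_1}\cdots x_r^{j_r}$ with $1\le i_1,\dots,i_n\le r$, $j_1+\dots+j_r=n$, each $x_k$ appearing exactly $j_k$ times. For $g_1,\dots,g_n\in G$ write $g_i=\sum_{k=1}^rg_{i,k}\mathbf e_k$ in the standard basis $\mathbf e_1,\dots,\mathbf e_r$ of $\mathbb R^r$. Then $[D^nQ_n](g_1,\dots,g_n)$ is the constant function $$\sum_{(s_1,\dots,s_n)\in\mathbf S(n)}g_{1,i_{s_1}}g_{2,i_{s_2}}\cdots g_{n,i_{s_n}}=j_1!\cdots j_r!\sum_{\boldsymbol\kappa}g_{1,k_1}g_{2,k_2}\cdots g_{n,k_n},$$ where $\mathbf S(n)$ is the set of permutations of $\{1,\dots,n\}$ and $\boldsymbol\kappa=(k_1,\dots,k_n)$ runs over all sequences of length $n$ containing each index $k\in\{1,\dots,r\}$ exactly $j_k$ times.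
   Context: $C(\mathbb R^r)$ is the algebra of continuous (real or complex) functions on $\mathbb R^r$, and $x_1,\dots,x_r$ are the standard coordinates. A function is $G$-periodic if $f(x+g)=f(x)$ for all $g\in G$. A $G$-periodic monomial of degree $m$ is a function $f(x)\,x_{i_1}\cdots x_{i_m}$ with $f\ne0$ continuous and $G$-periodic. For a group $G$ acting on a space $A$ by $f\mapsto f^g$: $\mathcal C^0(G,A)=A$; for $n\ge1$, $\mathcal C^n(G,A)$ is the space of functions $G^n\to A$ vanishing whenever some argument is $0\in G$; $(d_nc)(g_1,\dots,g_n)=[c(g_1,\dots,g_{n-1})]^{g_n}-c(g_1,\dots,g_{n-1})$; $D^0=\mathrm{id}$, $D^n=d_nD^{n-1}$. *)

(* Defs.v *)
From HB Require Import structures.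
From mathcomp Require Import all_boot all_order all_fingroup all_algebra.
From mathcomp Require Import all_classical all_reals all_analysis.
Import numFieldNormedType.Exports.
Set Implicit Arguments. Unset Strict Implicit. Unset Printing Implicit Defensive.
Import Order.TTheory GRing.Theory Num.Theory.
Local Open Scope ring_scope.

(* Points of R^r are row vectors 'rV[R]_r; coordinate x_k (k : 'I_r) is x 0 k. *)

Definition is_lattice (R : realType) (r : nat) (G : set 'rV[R]_r) : Prop :=
  exists B : 'M[R]_r, B \in unitmx /\
    forall v : 'rV[R]_r,
      G v <-> exists z : 'rV[int]_r, v = map_mx (fun a : int => a%:~R) z *m B.

Definition Gperiodic (R : realType) (r : nat) (G : set 'rV[R]_r)
  (f : 'rV[R]_r -> R) : Prop :=
  forall g, G g -> forall x, f (x + g) = f x.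

Definition act (R : realType) (r : nat) (g : 'rV[R]_r) (f : 'rV[R]_r -> R)
  : 'rV[R]_r -> R := fun x => f (x + g).

Definition cochain (R : realType) (r n : nat) :=
  ('I_n -> 'rV[R]_r) -> ('rV[R]_r -> R).

Definition dco (R : realType) (r n : nat) (c : cochain R r n) : cochain R r n.+1 :=
  fun gs x =>
    act (gs ord_max) (c (fun i : 'I_n => gs (widen_ord (leqnSn n) i))) x
    - c (fun i : 'I_n => gs (widen_ord (leqnSn n) i)) x.

Fixpoint Dco (R : realType) (r n : nat) (f : 'rV[R]_r -> R) : cochain R r n :=
  match n with
  | 0 => fun _ => f
  | n'.+1 => @dco R r n' (@Dco R r n' f)
  end.

(* Main.v *)
Require Import Defs.
From HB Require Import structures.
From mathcomp Require Import all_boot all_order all_fingroup all_algebra.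
From mathcomp Require Import all_classical all_reals all_analysis.
From mathcomp Require Import ring.
Import numFieldNormedType.Exports.
Import Order.TTheory GRing.Theory Num.Theory.
Local Open Scope ring_scope.
Set Implicit Arguments. Unset Strict Implicit. Unset Printing Implicit Defensive.

Section S.
Variables (R : realType) (r : nat).

Lemma DcoS n (f : 'rV[R]_r -> R) gs x :
  @Dco R r n.+1 f gs x =
  @Dco R r n f (fun i : 'I_n => gs (widen_ord (leqnSn n) i)) (x + gs ord_max)
  - @Dco R r n f (fun i : 'I_n => gs (widen_ord (leqnSn n) i)) x.
Proof. by []. Qed.

Lemma Dco_cst n c gs x : @Dco R r n.+1 (fun _ => c) gs x = 0.
Proof.
elim: n gs x => [|n IH] gs x; first by rewrite DcoS /= subrr.
by rewrite DcoS !IH subrr.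
Qed.

Lemma Dco_per (G : set 'rV[R]_r) n f h gs x : Gperiodic G f ->
  (forall l, G (gs l)) ->
  @Dco R r n (fun y => f y * h y) gs x = f x * @Dco R r n h gs x.
Proof.
move=> Pf; elim: n gs x => [|n IH] gs x Hg //.
rewrite !DcoS !IH; last 2 first.
- by move=> l; apply: Hg.
- by move=> l; apply: Hg.
by rewrite Pf // mulrBr.
Qed.

Lemma lift_max_widen n (l : 'I_n) : lift ord_max l = widen_ord (leqnSn n) l.
Proof. by apply: val_inj; rewrite /= /bump leqNgt ltn_ord. Qed.

Lemma lift_widen_max n (j : 'I_n.+1) :
  lift (widen_ord (leqnSn n.+1) j) ord_max = ord_max.
Proof. by apply: val_inj; rewrite /= /bump -ltnS ltn_ord. Qed.

Lemma lift_widen_widen n (j : 'I_n.+1) (l : 'I_n) :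
  lift (widen_ord (leqnSn n.+1) j) (widen_ord (leqnSn n) l)
  = widen_ord (leqnSn n.+1) (lift j l).
Proof. by apply: val_inj. Qed.

Lemma Dco_leib n (h : 'rV[R]_r -> R) a gs x :
  @Dco R r n.+1 (fun y => h y * y 0 a) gs x =
  x 0 a * @Dco R r n.+1 h gs x +
  \sum_(j < n.+1) gs j 0 a * @Dco R r n h (fun l => gs (lift j l)) (x + gs j).
Proof.
elim: n gs x => [|n IH] gs x.
  rewrite DcoS /= big_ord1 /= mxE.
  have -> : gs 0 = gs ord_max by congr gs; apply: val_inj.
  rewrite /dco /Defs.act /=. ring.
rewrite (@DcoS n.+1 (fun y => h y * y 0 a)) !IH (@DcoS n.+1 h) [in RHS]big_ord_recr.
have -> : (fun l => gs (lift ord_max l)) = (fun i : 'I_n.+1 => gs (widen_ord (leqnSn n.+1) i)).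
  by apply/funext => l; rewrite lift_max_widen.
have E : forall j : 'I_n.+1,
  @Dco R r n.+1 h (fun l => gs (lift (widen_ord (leqnSn n.+1) j) l)) (x + gs (widen_ord (leqnSn n.+1) j))
  = @Dco R r n h (fun l => gs (widen_ord (leqnSn n.+1) (lift j l))) (x + gs ord_max + gs (widen_ord (leqnSn n.+1) j))
  - @Dco R r n h (fun l => gs (widen_ord (leqnSn n.+1) (lift j l))) (x + gs (widen_ord (leqnSn n.+1) j)).
  move=> j; rewrite (@DcoS n) lift_widen_max (addrAC x).
  have -> : (fun i : 'I_n => gs (lift (widen_ord (leqnSn n.+1) j) (widen_ord (leqnSn n) i)))
     = (fun l => gs (widen_ord (leqnSn n.+1) (lift j l))).
    by apply/funext => l; rewrite lift_widen_widen.
  by [].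
under [in RHS]eq_bigr do rewrite E.
set S1 := \sum_(j < n.+1) gs (widen_ord (leqnSn n.+1) j) 0 a * @Dco R r n h _ (x + gs ord_max + _).
set S0 := \sum_(j < n.+1) gs (widen_ord (leqnSn n.+1) j) 0 a * @Dco R r n h _ (x + _).
have -> : \sum_(j < n.+1) gs (widen_ord (leqnSn n.+1) j) 0 a *
   (@Dco R r n h (fun l => gs (widen_ord (leqnSn n.+1) (lift j l))) (x + gs ord_max + gs (widen_ord (leqnSn n.+1) j))
  - @Dco R r n h (fun l => gs (widen_ord (leqnSn n.+1) (lift j l))) (x + gs (widen_ord (leqnSn n.+1) j))) = S1 - S0.
  by rewrite /S1 /S0 -sumrB; apply: eq_bigr => j _; rewrite mulrBr.
rewrite mxE /=. ring.
Qed.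

Lemma Dco_mono_zero m n (i : 'I_m -> 'I_r) gs x : (m <= n)%N ->
  @Dco R r n.+1 (fun y => \prod_(k < m) y 0 (i k)) gs x = 0.
Proof.
elim: m n i gs x => [|m IH] n i gs x hmn.
  under [X in @Dco R r n.+1 X]funext => y do rewrite big_ord0.
  exact: Dco_cst.
case: n hmn gs => [//|n] hmn gs.
have -> : (fun y : 'rV[R]_r => \prod_(k < m.+1) y 0 (i k)) =
   (fun y => (\prod_(k < m) y 0 (i (widen_ord (leqnSn m) k))) * y 0 (i ord_max)).
  by apply/funext => y; rewrite big_ord_recr.
rewrite Dco_leib IH ?(ltnW hmn) // mulr0 add0r big1 // => j _.
by rewrite IH ?mulr0.
Qed.

Lemma sum_perm_lift (V : Type) (idx : V) (op : Monoid.com_law idx) n (i0 j0 : 'I_n.+1) (F : 'S_n.+1 -> V) :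
  \big[op/idx]_(s : 'S_n.+1 | s i0 == j0) F s = \big[op/idx]_(s : 'S_n) F (lift_perm i0 j0 s).
Proof.
rewrite (reindex (lift_perm i0 j0)); last first.
  pose ulsf i (s : 'S_n.+1) k := odflt k (unlift (s i) (s (lift i k))).
  have ulsfK i (s : 'S_n.+1) k: lift (s i) (ulsf i s k) = s (lift i k).
    rewrite /ulsf; have:= neq_lift i k.
    by rewrite -(can_eq (permK s)) => /unlift_some[] ? ? ->.
  have inj_ulsf: injective (ulsf i0 _).
    move=> s; apply: can_inj (ulsf (s i0) s^-1%g) _ => k'.
    by rewrite {1}/ulsf ulsfK !permK liftK.
  exists (fun s => perm (inj_ulsf s)) => [s _ | s].
    by apply/permP=> k'; rewrite permE /ulsf lift_perm_lift lift_perm_id liftK.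
  move/(s _ =P _) => si0; apply/permP=> k.
  case: (unliftP i0 k) => [k'|] ->; rewrite ?lift_perm_id //.
  by rewrite lift_perm_lift -si0 permE ulsfK.
by apply: eq_bigl => s; rewrite lift_perm_id eqxx.
Qed.

Lemma sum_perm_part2 (V : Type) (idx : V) (op : Monoid.com_law idx) n (F : 'S_n.+1 -> V) :
  \big[op/idx]_(s : 'S_n.+1) F s = \big[op/idx]_(j < n.+1) \big[op/idx]_(s : 'S_n) F (lift_perm j ord_max s).
Proof.
rewrite (partition_big (fun s : 'S_n.+1 => s^-1%g ord_max) xpredT) //.
apply: eq_bigr => j _; rewrite -sum_perm_lift.
apply: eq_bigl => s /=; apply/eqP/eqP => [<-|<-]; by rewrite ?permKV ?permK.
Qed.

Lemma comb1 n (i : 'I_n.+1 -> 'I_r) (g : 'I_n.+1 -> 'rV[R]_r) :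
  \sum_(s : 'S_n.+1) \prod_(l < n.+1) g l 0 (i (s l)) =
  \sum_(j < n.+1) g j 0 (i ord_max) *
     \sum_(s : 'S_n) \prod_(l < n) g (lift j l) 0 (i (widen_ord (leqnSn n) (s l))).
Proof.
rewrite sum_perm_part2; apply: eq_bigr => j _; rewrite big_distrr.
apply: eq_bigr => s _; rewrite (bigD1_ord j) // lift_perm_id; congr (_ * _).
by apply: eq_bigr => l _; rewrite lift_perm_lift lift_max_widen.
Qed.

Lemma Dco_top n (i : 'I_n -> 'I_r) gs x :
  @Dco R r n (fun y => \prod_(k < n) y 0 (i k)) gs x =
  \sum_(s : 'S_n) \prod_(l < n) gs l 0 (i (s l)).
Proof.
elim: n i gs x => [|n IH] i gs x.
  rewrite /= big_ord0.
  under eq_bigr do rewrite big_ord0.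
  by rewrite sumr_const card_Sn.
have -> : (fun y : 'rV[R]_r => \prod_(k < n.+1) y 0 (i k)) =
   (fun y => (\prod_(k < n) y 0 (i (widen_ord (leqnSn n) k))) * y 0 (i ord_max)).
  by apply/funext => y; rewrite big_ord_recr.
rewrite Dco_leib (@DcoS n) !IH subrr mulr0 add0r comb1.
by apply: eq_bigr => j _; rewrite IH.
Qed.


Local Open Scope nat_scope.
Lemma cnt_sum n (P : pred 'I_n) : #|[set l | P l]| = (\sum_(l < n) (P l : nat))%N.
Proof.
rewrite -sum1_card big_mkcond /=; apply: eq_bigr => l _.
by rewrite inE; case: (P l).
Qed.

Lemma cntS n (i : 'I_n.+1 -> 'I_r) m k :
  #|[set l | i l == k]| = ((i m == k) + #|[set l | i (lift m l) == k]|)%N.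
Proof. by rewrite !cnt_sum (bigD1_ord m). Qed.

Lemma sum_perm_part (V : Type) (idx : V) (op : Monoid.com_law idx) n (F : 'S_n.+1 -> V) :
  \big[op/idx]_(s : 'S_n.+1) F s = \big[op/idx]_(j < n.+1) \big[op/idx]_(s : 'S_n) F (lift_perm ord_max j s).
Proof.
rewrite (partition_big (fun s : 'S_n.+1 => s ord_max) xpredT) //.
by apply: eq_bigr => j _; rewrite -sum_perm_lift.
Qed.

Lemma forall_lift n (m : 'I_n.+1) (Q : pred 'I_n.+1) :
  [forall l, Q l] = Q m && [forall l : 'I_n, Q (lift m l)].
Proof.
apply/forallP/andP => [H | [H1 /forallP H2] l].
  by split=> //; apply/forallP => l.
by case: (unliftP m l) => [l'|] ->.
Qed.

Lemma fiber n (i k : 'I_n -> 'I_r) :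
  \sum_(s : 'S_n | [forall l, i (s l) == k l]) 1%N =
  if [forall a, #|[set l | k l == a]| == #|[set l | i l == a]|]
  then \prod_(a < r) (#|[set l | i l == a]|)`! else 0%N.
Proof.
elim: n i k => [|n IH] i k.
  have c0 : forall j : 'I_0 -> 'I_r, forall a, #|[set l | j l == a]| = 0%N.
    by move=> j a; rewrite cnt_sum big_ord0.
  have -> : [forall a, #|[set l | k l == a]| == #|[set l | i l == a]|].
    by apply/forallP => a; rewrite !c0.
  rewrite /= [in RHS]big1; last by move=> a _; rewrite c0.
  rewrite sum1_card.
  have -> : #|[pred s : 'S_0 | [forall l, i (s l) == k l]]| = #|'S_0|.
    by apply: eq_card => s; rewrite !inE; apply/forallP => -[].
  by rewrite card_Sn.
rewrite big_mkcond /= sum_perm_part /=.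
set b := k ord_max.
have E1 : forall m : 'I_n.+1, \sum_(s : 'S_n) (if [forall l, i (lift_perm ord_max m s l) == k l] then 1%N else 0%N)
   = ((i m == b) * (if [forall a, #|[set l | k (lift ord_max l) == a]| == #|[set l | i (lift m l) == a]|]
  then \prod_(a < r) (#|[set l | i (lift m l) == a]|)`! else 0%N))%N.
  move=> m; have := IH (fun l => i (lift m l)) (fun l => k (lift ord_max l)).
  rewrite /= => <-.
  rewrite big_distrr /= [RHS]big_mkcond /=; apply: eq_bigr => s _.
  rewrite (forall_lift ord_max) lift_perm_id.
  under eq_forallb => l do rewrite lift_perm_lift.
  by case: (i m == b); case: [forall l, _].
under eq_bigr do rewrite E1.
have E2 : forall m : 'I_n.+1, i m = b ->
  [forall a, #|[set l | k (lift ord_max l) == a]| == #|[set l | i (lift m l) == a]|] =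
  [forall a, #|[set l | k l == a]| == #|[set l | i l == a]|].
  move=> m Hm; apply: eq_forallb => a.
  by rewrite (cntS k ord_max a) (cntS i m a) -/b Hm eqn_add2l.
case: ifP => Hc; last first.
  rewrite big1 // => m _; case: eqP => [Hm|]; last by rewrite mul0n.
  by rewrite E2 // Hc muln0.
set c2 := \prod_(a < r) (#|[set l | i l == a]| - (b == a))`!.
have E3 : forall m : 'I_n.+1, i m = b ->
  \prod_(a < r) (#|[set l | i (lift m l) == a]|)`! = c2.
  move=> m Hm; apply: eq_bigr => a _.
  by rewrite (cntS i m a) Hm addKn.
transitivity (\sum_(m < n.+1) ((i m == b) * c2))%N.
  apply: eq_bigr => m _; case: eqP => [Hm|]; last by rewrite !mul0n.
  by rewrite E2 // Hc E3.
rewrite -big_distrl /= -cnt_sum.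
have Hb : #|[set l | i l == b]| = #|[set l | k l == b]|.
  by move/forallP: Hc => /(_ b) /eqP.
have [p Hp] : exists p, #|[set l | i l == b]| = p.+1.
  by exists #|[set l | k (lift ord_max l) == b]|; rewrite Hb (cntS k ord_max b) eqxx.
rewrite Hp /c2 (bigD1 b) //= [in RHS](bigD1 b) //= Hp eqxx subn1 /= factS mulnA.
congr (_ * _)%N; apply: eq_bigr => a Ha.
by rewrite eq_sym (negbTE Ha) subn0.
Qed.
Local Open Scope ring_scope.

Lemma comb2 n (i : 'I_n -> 'I_r) (g : 'I_n -> 'rV[R]_r) :
  \sum_(s : 'S_n) \prod_(l < n) g l 0 (i (s l))
  = (\prod_(k < r) (#|[set l | i l == k]|)`!)%:R *
        \sum_(kappa : {ffun 'I_n -> 'I_r} |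
                [forall k, #|[set l | kappa l == k]| == #|[set l | i l == k]|])
           \prod_(l < n) g l 0 (kappa l).
Proof.
pose F (kap : {ffun 'I_n -> 'I_r}) := \prod_(l < n) g l 0 (kap l).
transitivity (\sum_(s : 'S_n) F [ffun l => i (s l)]).
  by apply: eq_bigr => s _; rewrite /F; apply: eq_bigr => l _; rewrite ffunE.
rewrite (partition_big (fun s : 'S_n => [ffun l => i (s l)]) xpredT) //=.
transitivity (\sum_(kap : {ffun 'I_n -> 'I_r})
   ((\sum_(s : 'S_n | [forall l, i (s l) == kap l]) 1)%N)%:R * F kap).
  apply: eq_bigr => kap _.
  rewrite (eq_bigr (fun _ => F kap)); last by move=> s /eqP ->.
  rewrite (eq_bigl (fun s : 'S_n => [forall l, i (s l) == kap l])); last first.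
    move=> s; apply/eqP/forallP => [<- l|H]; first by rewrite ffunE.
    by apply/ffunP => l; rewrite ffunE; exact/eqP.
  by rewrite sumr_const sum1_card mulr_natl.
rewrite big_distrr /= [RHS]big_mkcond /=; apply: eq_bigr => kap _.
rewrite fiber; case: ifP => _; last by rewrite mul0r.
by [].
Qed.

End S.

Theorem lemma3p1 (R : realType) (r : nat) (G : set 'rV[R]_r) :
  is_lattice G ->
  (* (a) *)
  (forall (n m : nat) (f : 'rV[R]_r -> R) (i : 'I_m -> 'I_r),
      (m <= n)%N -> continuous f -> Gperiodic G f -> (exists x, f x != 0) ->
      forall gs : 'I_n.+1 -> 'rV[R]_r, (forall l, G (gs l)) ->
      forall x, @Dco R r n.+1 (fun y => f y * \prod_(k < m) y 0 (i k)) gs x = 0)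
  /\
  (* (b) *)
  (forall (n : nat) (i : 'I_n -> 'I_r), (1 <= n)%N ->
      forall gs : 'I_n -> 'rV[R]_r, (forall l, G (gs l)) ->
      (forall x, @Dco R r n (fun y => \prod_(k < n) y 0 (i k)) gs x
                 = \sum_(s : 'S_n) \prod_(l < n) gs l 0 (i (s l)))
      /\
      \sum_(s : 'S_n) \prod_(l < n) gs l 0 (i (s l))
      = (\prod_(k < r) (#|[set l | i l == k]|)`!)%:R *
        \sum_(kappa : {ffun 'I_n -> 'I_r} |
                [forall k, #|[set l | kappa l == k]| == #|[set l | i l == k]|])
           \prod_(l < n) gs l 0 (kappa l)).
Proof.
move=> _; split.
  move=> n m f i hmn _ Pf _ gs Hg x.
  by rewrite (Dco_per _ _ Pf Hg) Dco_mono_zero // mulr0.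
move=> n i _ gs _; split; last exact: comb2.
by move=> x; exact: Dco_top.
Qed.
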